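(* For every integer $n\ge 1$, $$B_{2^{n+1}-i}(t)-B_{2^{n}+i}(t)=\begin{cases} t(t-1)\,B_{2^{n-1}-i}(t) & \text{for } i=0,1,\dots,2^{n-1},\\ -t(t-1)\,B_{i-2^{n-1}}(t) & \text{for } i=2^{n-1}+1,\dots,2^{n}.\end{cases}$$
   Context: The Stern polynomials $B_n(t)\in\mathbb{Z}[t]$, $n\ge 0$, are defined by $B_0(t)=0$, $B_1(t)=1$, $B_{2n}(t)=tB_n(t)$ and $B_{2n+1}(t)=B_n(t)+B_{n+1}(t)$ for $n\ge 1$. *)

(* Defs.v *)
From HB Require Import structures.
From mathcomp Require Import all_boot all_order all_algebra.
Set Implicit Arguments. Unset Strict Implicit. Unset Printing Implicit Defensive.
Import Order.TTheory GRing.Theory Num.Theory.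
Local Open Scope ring_scope.

(* Fuel-based recursion: stern_fuel k n follows the defining recurrence
   B_0 = 0, B_1 = 1, B_{2m} = t B_m, B_{2m+1} = B_m + B_{m+1} (m >= 1);
   with fuel k > n the result is independent of k. *)
Fixpoint stern_fuel (k n : nat) : {poly int} :=
  match k with
  | 0 => 0
  | k'.+1 =>
    if n == 0%N then 0
    else if n == 1%N then 1
    else if ~~ odd n then 'X * stern_fuel k' n./2
    else stern_fuel k' n./2 + stern_fuel k' n./2.+1
  end.

Definition stern (n : nat) : {poly int} := stern_fuel n.+1 n.

(* Main.v *)
Require Import Defs.
From HB Require Import structures.
From mathcomp Require Import all_boot all_order all_algebra.
From mathcomp Require Import zify ring.
Import GRing.Theory.
Local Open Scope ring_scope.

Lemma sf_indep k : forall k' n, (n < k)%N -> (n < k')%N ->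
  stern_fuel k n = stern_fuel k' n.
Proof.
elim: k => [|k IH] [|k'] n //= hk hk'.
case: (n =P 0%N) => // /eqP n0; case: (n =P 1%N) => // /eqP n1.
have e := odd_double_half n; rewrite -muln2 in e.
case: (odd n) e => /= e.
  rewrite (IH k' n./2) ?(IH k' n./2.+1) //; lia.
rewrite (IH k' n./2) //; lia.
Qed.

Lemma stern_sf k n : (n < k)%N -> stern_fuel k n = stern n.
Proof. by move=> h; apply: sf_indep. Qed.

Lemma stern0 : stern 0 = 0. Proof. by []. Qed.
Lemma stern1 : stern 1 = 1. Proof. by []. Qed.

Lemma sf_S k n : stern_fuel k.+1 n =
  if n == 0%N then 0
    else if n == 1%N then 1
    else if ~~ odd n then 'X * stern_fuel k n./2
    else stern_fuel k n./2 + stern_fuel k n./2.+1.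
Proof. by []. Qed.

Lemma stern_even m : stern (2 * m) = 'X * stern m.
Proof.
case: m => [|m]; first by rewrite muln0 stern0 mulr0.
rewrite {1}/stern sf_S.
have -> : (2 * m.+1 == 0)%N = false by apply/eqP; lia.
have -> : (2 * m.+1 == 1)%N = false by apply/eqP; lia.
have -> : odd (2 * m.+1) = false by rewrite oddM.
have -> : (2 * m.+1)./2 = m.+1 by rewrite mul2n doubleK.
rewrite stern_sf; [by [] | lia].
Qed.

Lemma stern_odd m : stern (2 * m).+1 = stern m + stern m.+1.
Proof.
case: m => [|m]; first by rewrite muln0 stern0 add0r.
rewrite {1}/stern sf_S.
have -> : ((2 * m.+1).+1 == 0)%N = false by apply/eqP; lia.
have -> : ((2 * m.+1).+1 == 1)%N = false by apply/eqP; lia.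
have -> : odd (2 * m.+1).+1 = true by rewrite oddS oddM.
have -> : (2 * m.+1).+1./2 = m.+1 by rewrite mul2n /= uphalf_double.
rewrite !stern_sf; [by [] | lia | lia].
Qed.

Lemma main m : forall i, (i <= 2 ^ m.+1)%N ->
  stern (2 ^ m.+2 - i) - stern (2 ^ m.+1 + i) =
  if (i <= 2 ^ m)%N then 'X * ('X - 1) * stern (2 ^ m - i)
  else - ('X * ('X - 1) * stern (i - 2 ^ m)).
Proof.
have s2 : stern 2 = 'X by rewrite (stern_even 1) stern1 mulr1.
have s3 : stern 3 = 1 + 'X by rewrite (stern_odd 1) stern1 s2.
have s4 : stern 4 = 'X * 'X by rewrite (stern_even 2) s2.
elim: m => [|m IH] i hi.
  rewrite expn1 in hi; rewrite expn0.
  case: i hi => [|[|[|i]]] // _.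
  - by rewrite s4 s2 stern1; ring.
  - by rewrite s3 stern0 /=; ring.
  - by rewrite s4 s2 stern1 /=; ring.
move: IH hi; rewrite !expnS; set p := (2 ^ m)%N; move=> IH hi.
have [j [ei | ei]] : exists j, i = (2 * j)%N \/ i = (2 * j).+1.
  exists i./2; have := odd_double_half i; rewrite -muln2.
  case: (odd i) => /= e; [right | left]; lia.
all: subst i.
- have -> : (2 * (2 * (2 * p)) - 2 * j = 2 * (2 * (2 * p) - j))%N by lia.
  have -> : (2 * (2 * p) + 2 * j = 2 * (2 * p + j))%N by lia.
  rewrite !stern_even -mulrBr IH; last by lia.
  case: ifP => hj.
  + have -> : (2 * j <= 2 * p)%N = true by lia.
    have -> : (2 * p - 2 * j = 2 * (p - j))%N by lia.
    by rewrite stern_even; ring.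
  + have -> : (2 * j <= 2 * p)%N = false by apply/negbTE; lia.
    have -> : (2 * j - 2 * p = 2 * (j - p))%N by lia.
    by rewrite stern_even; ring.
- have -> : (2 * (2 * (2 * p)) - (2 * j).+1 = (2 * (2 * (2 * p) - j.+1)).+1)%N by lia.
  have -> : (2 * (2 * p) + (2 * j).+1 = (2 * (2 * p + j)).+1)%N by lia.
  rewrite !stern_odd.
  have -> : ((2 * (2 * p) - j.+1).+1 = 2 * (2 * p) - j)%N by lia.
  have -> : ((2 * p + j).+1 = 2 * p + j.+1)%N by lia.
  have e : forall a b c d : {poly int}, a + b - (c + d) = (a - d) + (b - c)
    by move=> a b c d; ring.
  rewrite e !IH; try lia.
  have [hj | hj | hj] := ltngtP j p.
  + rewrite ifT; last lia.
    have -> : (2 * p - (2 * j).+1 = (2 * (p - j.+1)).+1)%N by lia.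
    rewrite stern_odd.
    have -> : ((p - j.+1).+1 = p - j)%N by lia.
    by ring.
  + rewrite ifF; last by apply/negbTE; lia.
    have -> : ((2 * j).+1 - 2 * p = (2 * (j - p)).+1)%N by lia.
    have -> : (j.+1 - p = (j - p).+1)%N by lia.
    by rewrite stern_odd; ring.
  + subst j.
    rewrite ifF; last by apply/negbTE; lia.
    rewrite subnn.
    have -> : ((2 * p).+1 - 2 * p = 1)%N by lia.
    have -> : (p.+1 - p = 1)%N by lia.
    by rewrite stern0; ring.
Qed.

Theorem theorem2p3 (n i : nat) : (1 <= n)%N ->
  ((i <= 2 ^ n.-1)%N ->
     stern (2 ^ n.+1 - i) - stern (2 ^ n + i)
     = 'X * ('X - 1) * stern (2 ^ n.-1 - i)) /\
  ((2 ^ n.-1 < i <= 2 ^ n)%N ->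
     stern (2 ^ n.+1 - i) - stern (2 ^ n + i)
     = - ('X * ('X - 1) * stern (i - 2 ^ n.-1))).
Proof.
case: n => [|m] // _ /=; split => h.
  rewrite main ?h // expnS; lia.
move/andP: h => [h1 h2].
rewrite main // ifF //; apply/negbTE; lia.
Qed.
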